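(* Let $s\geq 2$ be an even integer, let $m\geq 3$ be an integer, and let $n$ be an integer with $n\geq (2sm-1)\left(\frac{sm}{2}-1\right)+1$. Then $$R(P_n,J_{s,m})=n+\frac{sm}{2}-1.$$
   Context: All graphs are finite and simple. For graphs $G$ and $H$, the Ramsey number $R(G,H)$ is the least natural number $N$ such that for every graph $F$ on $N$ vertices, either $F$ contains $G$ as a subgraph or the complement $\overline{F}$ contains $H$ as a subgraph. $P_n$ denotes the path on $n$ vertices. For integers $s,m\geq 2$, the generalized Jahangir graph $J_{s,m}$ is the graph on $sm+1$ vertices consisting of a cycle $C_{sm}=v_1v_2\cdots v_{sm}v_1$ together with one additional vertex adjacent to exactly the $m$ cycle vertices $v_1, v_{s+1}, v_{2s+1},\ldots,v_{(m-1)s+1}$ (i.e., $m$ vertices of the cycle at distance $s$ from each other along the cycle). *)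

(* Defs.v *)
From mathcomp Require Import all_boot.
Set Implicit Arguments. Unset Strict Implicit. Unset Printing Implicit Defensive.

Definition simple_graph (T : finType) (e : rel T) : Prop :=
  symmetric e /\ irreflexive e.

Definition compl_graph (T : finType) (e : rel T) : rel T :=
  fun x y => (x != y) && ~~ e x y.

Definition contains_subgraph (T U : finType) (G : rel T) (F : rel U) : Prop :=
  exists f : T -> U, injective f /\ forall x y, G x y -> F (f x) (f y).

Definition ramsey_arrow (T1 T2 : finType) (G : rel T1) (H : rel T2) (N : nat)
  : Prop :=
  forall F : rel 'I_N, simple_graph F ->
    contains_subgraph G F \/ contains_subgraph H (compl_graph F).

Definition is_ramsey_number (T1 T2 : finType) (G : rel T1) (H : rel T2)
  (N : nat) : Prop :=
  ramsey_arrow G H N /\ forall M, M < N -> ~ ramsey_arrow G H M.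

Definition path_graph (n : nat) : rel 'I_n :=
  fun i j => (i.+1 == j :> nat) || (j.+1 == i :> nat).

(* Vertices 0,...,s*m-1 form the cycle C_{sm} (vertex i is v_{i+1} of the
   paper), i ~ (i+1) mod sm; vertex s*m is the extra vertex, adjacent to the
   cycle vertices i with i = 0 mod s, i.e. v_1, v_{s+1}, ..., v_{(m-1)s+1}. *)
Definition jahangir_graph (s m : nat) : rel 'I_(s * m).+1 :=
  fun i j =>
    let N := s * m in
    [|| (i < N) && (j < N) && ((j == i.+1 %% N :> nat) || (i == j.+1 %% N :> nat)),
        (i == N :> nat) && (j < N) && (s %| j)
      | (j == N :> nat) && (i < N) && (s %| i)].

Arguments path_graph n : clear implicits.
Arguments jahangir_graph s m : clear implicits.

(* Main.v *)
Require Import Defs.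
From mathcomp Require Import all_boot.
From mathcomp Require Import zify.
From Stdlib Require Import Classical.
Set Implicit Arguments. Unset Strict Implicit. Unset Printing Implicit Defensive.

Lemma card_exists_le (I J : finType) (A : {set I}) (P : I -> J -> bool) :
  #|[set j | [exists i in A, P i j]]| <= \sum_(i in A) #|[set j | P i j]|.
Proof.
rewrite -sum1_card.
apply: (@leq_trans (\sum_(j in [set j | [exists i in A, P i j]]) \sum_(i in A) (P i j : nat))).
  apply: leq_sum => j; rewrite inE => /existsP [i /andP [iA Pij]].
  by rewrite (bigD1 i) //= Pij.
apply: (@leq_trans (\sum_j \sum_(i in A) (P i j : nat))).
  by rewrite [X in _ <= X](bigID (mem [set j | [exists i in A, P i j]])) /= leq_addr.
rewrite exchange_big /=. apply: leq_sum => i _.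
rewrite -sum1_card [X in _ <= X]big_mkcond /=; apply: leq_sum => j _.
by rewrite inE; case: (P i j).
Qed.

Lemma disjI (T : finType) (A B : {set T}) :
  (forall x, x \in A -> x \in B -> False) -> [disjoint A & B].
Proof.
move=> h; rewrite disjoints_subset; apply/subsetP => x xA; rewrite inE.
by apply/negP => xB; exact: h xA xB.
Qed.

Lemma split_seq (V : finType) (e : seq V) k :
  uniq e -> k <= size e ->
  [/\ [disjoint [set x in take k e] & [set x in drop k e]],
      #|[set x in take k e]| = k & #|[set x in drop k e]| = size e - k].
Proof.
move=> ue ke.
have := ue; rewrite -{1}(cat_take_drop k e) cat_uniq => /and3P [u1 h u2].
split.
- apply: disjI => x; rewrite !inE => h1 h2; move/negP: h; apply.
  by apply/hasP; exists x.
- by rewrite cardsE; move/card_uniqP: u1 => ->; rewrite size_take; case: ltnP; lia.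
- by rewrite cardsE; move/card_uniqP: u2 => ->; rewrite size_drop.
Qed.

Section Core.
Variables (V : finType) (F : rel V) (k : nat) (x0 : V).
Hypothesis Fsym : symmetric F.
Hypothesis Firr : irreflexive F.
Hypothesis noK : forall A B : {set V}, [disjoint A & B] -> k <= #|A| -> k.+1 <= #|B| ->
  exists x y, [/\ x \in A, y \in B & F x y].

Definition is_path (g : nat -> V) (q : nat) :=
  (forall a b, a < q -> b < q -> g a = g b -> a = b) /\
  (forall a, a.+1 < q -> F (g a) (g a.+1)).

Definition pset g q : {set V} := [set g (nat_of_ord a) | a in 'I_q].

Lemma psetP g q x : reflect (exists2 a, a < q & x = g a) (x \in pset g q).
Proof.
apply: (iffP imsetP) => [[a _ ->]|[a aq ->]]; first by exists a.
by exists (Ordinal aq).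
Qed.

Lemma card_pset g q : is_path g q -> #|pset g q| = q.
Proof.
case=> inj _; rewrite card_imset ?card_ord // => a b h; apply: val_inj.
exact: inj (ltn_ord a) (ltn_ord b) h.
Qed.

Lemma path_restr g q q' : is_path g q -> q' <= q -> is_path g q'.
Proof.
case=> inj adj le; split=> [a b ha hb|a ha]; first by apply: inj; lia.
by apply: adj; lia.
Qed.

Lemma indep_le (I : {set V}) : {in I &, forall x y, ~~ F x y} -> #|I| <= 2 * k.
Proof.
move=> hI; rewrite leqNgt; apply/negP => hlt.
have ue : uniq (enum I) := enum_uniq _.
have se : size (enum I) = #|I| by rewrite cardE.
have [d c1 c2] := split_seq ue (k := k) ltac:(lia).
have [x [y [hx hy hF]]] := noK d ltac:(lia) ltac:(lia).
move: hx hy; rewrite !inE => /mem_take hx /mem_drop hy.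
rewrite mem_enum in hx; rewrite mem_enum in hy.
by move: (hI x y hx hy); rewrite hF.
Qed.

Definition state (S : {set V}) g q := [/\ is_path g q, [disjoint S & pset g q], #|S| <= k &
  forall x y, x \in S -> y \notin S -> y \notin pset g q -> ~~ F x y].

Lemma state_card S g q : state S g q -> #|S :|: pset g q| = #|S| + q.
Proof.
case=> p d _ _; rewrite cardsU (disjoint_setI0 d) cards0 card_pset //; lia.
Qed.

Lemma state_le S g q : state S g q -> #|S| + q <= #|V|.
Proof. by move=> st; rewrite -(state_card st) max_card. Qed.


Lemma state_step S g q : state S g q -> #|S| < k -> k <= #|V| ->
  exists S' g' q', state S' g' q' /\
    (k - #|S'|) * (#|V|).+1 + (#|V| - #|S'| - q') <
    (k - #|S|) * (#|V|).+1 + (#|V| - #|S| - q).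
Proof.
move=> st Sk kV; have le := state_le st; have cU := state_card st.
case: st => [[inj adj] dis Sle ne].
case: (posnP q) => [q0|qpos].
- subst q.
  have : 0 < #|~: S| by have := cardsC S; lia.
  case/card_gt0P => t; rewrite inE => tS.
  exists S, (fun _ => t), 1; split; last by lia.
  split.
  + split=> [a b ha hb _|a ha]; lia.
  + apply: disjI => x xS /psetP [a a1 ex]; subst x.
    by rewrite xS in tS.
  + exact: Sle.
  + move=> x y xS yS yP; apply: ne => //.
    by apply/psetP => [[a]].
- set u := g q.-1.
  have uP : u \in pset g q by apply/psetP; exists q.-1 => //; lia.
  case: (boolP [exists t, [&& t \notin S, t \notin pset g q & F u t]]).
  + case/existsP => t /and3P [tS tP ut].
    have lt : #|S| + q < #|V|.
      have : 0 < #|~: (S :|: pset g q)|.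
        by apply/card_gt0P; exists t; rewrite !inE (negbTE tS) (negbTE tP).
      have := cardsC (S :|: pset g q); lia.
    exists S, (fun a => if a == q then t else g a), q.+1; split; last by lia.
    split.
    * split.
      -- move=> a b ha hb.
         case: eqP => [ea|na]; case: eqP => [eb|nb]; try lia.
         ++ move=> e; exfalso; move/negP: tP; apply; apply/psetP; exists b; [lia|done].
         ++ move=> e; exfalso; move/negP: tP; apply; apply/psetP; exists a; [lia|done].
         ++ by apply: inj; lia.
      -- move=> a ha.
         case: eqP => [ea|na]; first lia.
         case: eqP => [eb|nb].
         ++ have -> : a = q.-1 by lia.
           exact: ut.
         ++ by apply: adj; lia.
    * apply: disjI => x xS /psetP [a ha ex]; subst x.
      move: xS; case: eqP => [ea|na] xS; first by rewrite xS in tS.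
      have : g a \in pset g q by apply/psetP; exists a => //; lia.
      by rewrite (disjointFr dis xS).
    * exact: Sle.
    * move=> x y xS yS yP; apply: ne => //.
      apply/negP => /psetP [a ha ey]; move/negP: yP; apply.
      apply/psetP; exists a; first lia.
      by case: eqP => [ea|//]; lia.
  + rewrite negb_exists => /forallP nt.
    have uS : u \notin S by apply/negP => uS; rewrite (disjointFr dis uS) in uP.
    exists (u |: S), g, q.-1.
    have cS : #|u |: S| = #|S|.+1 by rewrite cardsU1 uS.
    split; last by rewrite cS; nia.
    split.
    * exact: path_restr (conj inj adj) (leq_pred q).
    * apply: disjI => x; rewrite in_setU1 => /orP [/eqP ->|xS] /psetP [a ha ex].
      -- have : q.-1 = a by apply: inj; rewrite ?ex //; lia.
         lia.
      -- have : x \in pset g q by apply/psetP; exists a => //; lia.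
         by rewrite (disjointFr dis xS).
    * by rewrite cS.
    * move=> x y; rewrite !in_setU1 negb_or => xS /andP [yu yS] yP.
      have yP' : y \notin pset g q.
        apply/negP => /psetP [a ha ey].
        case: (ltnP a q.-1) => al.
        -- by move/negP: yP; apply; apply/psetP; exists a.
        -- have : a = q.-1 by lia.
           by move=> ea; move: yu; rewrite ey ea eqxx.
      case/orP: xS => [/eqP ->|xS]; last exact: ne.
      by have := nt y; rewrite yS yP' /=.
Qed.

Lemma dfs_path : k <= #|V| -> exists g q, is_path g q /\ #|V| <= q + 2 * k.
Proof.
move=> kV.
suff [S [g [q [st Sk]]]] : exists S g q, state S g q /\ #|S| = k.
  exists g, q; split; first by case: st.
  have cU := state_card st.
  have cT := cardsC (S :|: pset g q).
  set T := ~: (S :|: pset g q) in cT *.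
  have : #|T| <= k.
    rewrite leqNgt; apply/negP => Tk.
    have dST : [disjoint S & T].
      by apply: disjI => x xS; rewrite !inE xS.
    have [x [y [xS yT Fxy]]] := noK dST ltac:(lia) Tk.
    case: st => _ _ _ ne.
    move: yT; rewrite !inE negb_or => /andP [yS yP].
    by move: (ne x y xS yS yP); rewrite Fxy.
  lia.
have st0 : state set0 (fun _ => x0) 0.
  split.
  - split=> [a b ha hb _|a ha]; lia.
  - by apply: disjI => x; rewrite inE.
  - by rewrite cards0.
  - by move=> x y; rewrite inE.
suff gen : forall mu S g q, state S g q ->
    (k - #|S|) * (#|V|).+1 + (#|V| - #|S| - q) < mu ->
    exists S g q, state S g q /\ #|S| = k.
  exact: gen _ _ _ _ st0 (ltnSn _).
elim=> [|mu IH] S g q st lt; first by [].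
case: (ltnP #|S| k) => Sk.
- have [S' [g' [q' [st' lt']]]] := state_step st Sk kV.
  apply: IH st' _; lia.
- exists S, g, q; split => //.
  by case: st => _ _ Sle _; apply/eqP; rewrite eqn_leq Sle Sk.
Qed.

Lemma adjS g q i j : is_path g q -> i < q -> j < q -> (j = i.+1 \/ i = j.+1) ->
  F (g i) (g j).
Proof.
case=> _ adj iq jq [e|e]; subst; first by apply: adj.
by rewrite Fsym; apply: adj.
Qed.

Lemma Fcongr u v u' v' : F u v -> u' = u -> v' = v -> F u' v'.
Proof. by move=> h -> ->. Qed.

Lemma path_gen g q x p0 (tau : nat -> nat) :
  is_path g q -> x \notin pset g q ->
  (forall b, b < q.+1 -> b != p0 -> tau b < q) ->
  (forall b1 b2, b1 < q.+1 -> b2 < q.+1 -> b1 != p0 -> b2 != p0 ->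
     tau b1 = tau b2 -> b1 = b2) ->
  (forall b, b.+1 < q.+1 ->
     F (if b == p0 then x else g (tau b)) (if b.+1 == p0 then x else g (tau b.+1))) ->
  is_path (fun b => if b == p0 then x else g (tau b)) q.+1.
Proof.
move=> [inj adj] xP tq tinj hadj; split; last exact: hadj.
move=> b1 b2 h1 h2 /=.
case: eqP => e1; case: eqP => e2; try lia.
- move=> e; exfalso; move/negP: xP; apply; apply/psetP; exists (tau b2) => //.
  by apply: tq => //; apply/eqP.
- move=> e; exfalso; move/negP: xP; apply; apply/psetP; exists (tau b1) => //.
  by apply: tq => //; apply/eqP.
- move=> e; apply: tinj => //; try exact/eqP.
  by apply: inj => //; apply: tq => //; apply/eqP.
Qed.

Ltac splitifs := repeat match goal with
  | |- context [if ?c then _ else _] => let E := fresh "E" in destruct c eqn:E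
  end.

Ltac solveF :=
  splitifs;
  first [ exfalso; lia
        | match goal with
          | P : is_path ?g ?q |- is_true (F (?g _) (?g _)) => apply: (adjS P); lia
          end
        | match goal with H : is_true (F _ _) |- _ =>
            apply: (Fcongr H); solve [reflexivity | f_equal; lia] end
        | rewrite Fsym; match goal with H : is_true (F _ _) |- _ =>
            apply: (Fcongr H); solve [reflexivity | f_equal; lia] end ].

Ltac solve_pg :=
  apply: path_gen => //;
  first [ move=> b hb hp; splitifs; lia
  | move=> b1 b2 h1 h2 hp1 hp2; splitifs; lia
  | move=> b hb; solveF ].

Lemma deg_bound g q x : is_path g q -> (forall g', ~ is_path g' q.+1) ->
  x \notin pset g q -> 0 < q -> 0 < k ->
  #|[set a : 'I_q | F x (g a)]| + 2 <= 2 * k.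
Proof.
move=> P noext xP q0 k0.
have e1 : ~~ F x (g 0).
  apply/negP => h; apply: (noext (fun b => if b == 0 then x else g b.-1)).
  solve_pg.
have e2 : ~~ F x (g q.-1).
  apply/negP => h; apply: (noext (fun b => if b == q then x else g b)).
  rewrite Fsym in h.
  solve_pg.
have e3 : forall a, a.+1 < q -> F x (g a) -> ~~ F x (g a.+1).
  move=> a aq h1; apply/negP => h2.
  apply: (noext (fun b => if b == a.+1 then x else g (if b <= a then b else b.-1))).
  rewrite Fsym in h1.
  solve_pg.
have e4 : forall a, a.+1 < q -> F x (g a) -> ~~ F (g 0) (g a.+1).
  move=> a aq h1; apply/negP => h2.
  apply: (noext (fun b => if b == 0 then x else g (if b <= a.+1 then a.+1 - b else b.-1))).
  solve_pg.
have e5 : forall a c, a < c -> c.+1 < q -> F x (g a) -> F x (g c) ->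
    ~~ F (g a.+1) (g c.+1).
  move=> a c ac cq h1 h2; apply/negP => h3.
  apply: (noext (fun b => if b == a.+1 then x else
     g (if b <= a then b else if b <= c.+1 then a + c + 2 - b else b.-1))).
  rewrite Fsym in h1.
  solve_pg.
case: (P) => inj adj.
have gP : forall a, a < q -> g a \in pset g q by move=> a aq; apply/psetP; exists a.
have xg : forall a, a < q -> x != g a.
  by move=> a aq; apply/eqP => e; move/negP: xP; apply; rewrite e gP.
set D := [set a : 'I_q | F x (g a)].
have Dlt : forall a : 'I_q, a \in D -> a.+1 < q.
  move=> a; rewrite inE => h.
  have : (a : nat) != q.-1 by apply/eqP => e; move: h; rewrite e (negbTE e2).
  have := ltn_ord a; lia.
set Img := [set g (nat_of_ord a).+1 | a in D].
have cImg : #|Img| = #|D|.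
  apply: card_in_imset => a b aD bD e.
  apply: ord_inj; have := inj _ _ (Dlt _ aD) (Dlt _ bD) e; lia.
have ImgP : forall y, y \in Img -> exists2 a : 'I_q, a \in D & y = g a.+1.
  by move=> y /imsetP [a aD ->]; exists a.
set I := x |: (g 0 |: Img).
have cI : #|I| = #|D| + 2.
  rewrite /I !cardsU1 cImg.
  have -> : g 0 \in Img = false.
    apply/negP => /ImgP [a aD e].
    have := inj _ _ q0 (Dlt _ aD) e; lia.
  have -> : x \in g 0 |: Img = false.
    apply/negP; rewrite in_setU1 => /orP [/eqP e|/ImgP [a aD e]].
    - by move: (xg 0 q0); rewrite e eqxx.
    - by move: (xg _ (Dlt _ aD)); rewrite e eqxx.
  by rewrite /=; lia.
rewrite -cI; apply: indep_le.
have key : forall u v, u \in I -> v \in I -> (u == x) || (u == g 0) ->  ~~ F u v.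
  move=> u v uI vI /orP [/eqP eu|/eqP eu]; subst u.
  - move: vI; rewrite !in_setU1 => /orP [/eqP ->|/orP [/eqP ->|/ImgP [a aD ->]]].
    + by rewrite Firr.
    + exact: e1.
    + by apply: e3 (Dlt _ aD) _; move: aD; rewrite inE.
  - move: vI; rewrite !in_setU1 => /orP [/eqP ->|/orP [/eqP ->|/ImgP [a aD ->]]].
    + by rewrite Fsym.
    + by rewrite Firr.
    + by apply: e4 (Dlt _ aD) _; move: aD; rewrite inE.
move=> u v uI vI.
have uI' := uI; have vI' := vI.
move: uI' vI'; rewrite !in_setU1 => hu hv.
case/orP: hu => [hu|/orP [hu|/ImgP [a aD eu]]].
- by apply: key; rewrite ?hu.
- by apply: key; rewrite ?hu ?orbT.
case/orP: hv => [hv|/orP [hv|/ImgP [c cD ev]]].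
- by rewrite Fsym; apply: key; rewrite ?hv.
- by rewrite Fsym; apply: key; rewrite ?hv ?orbT.
subst u v.
have ha : F x (g a) by move: aD; rewrite inE.
have hc : F x (g c) by move: cD; rewrite inE.
case: (ltngtP a c) => ac.
- exact: e5 ac (Dlt _ cD) ha hc.
- by rewrite Fsym; exact: e5 ac (Dlt _ aD) hc ha.
- by rewrite ac Firr.
Qed.

Lemma extend g q : is_path g q -> k * (2 * k - 2) + k + 1 <= q -> q + k <= #|V| ->
  0 < k -> exists g', is_path g' q.+1.
Proof.
move=> P hq hV k0.
have q0 : 0 < q by apply: leq_trans hq; rewrite addn1.
case: (classic (exists g', is_path g' q.+1)) => // noext'.
have noext : forall g', ~ is_path g' q.+1 by move=> g' h; apply: noext'; exists g'.
exfalso.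
have cR : #|~: pset g q| = #|V| - q.
  have := cardsC (pset g q); rewrite card_pset //; lia.
have ue : uniq (enum (~: pset g q)) := enum_uniq _.
have se : size (enum (~: pset g q)) = #|V| - q by rewrite -cardE.
have [_ cA _] := split_seq ue (k := k) ltac:(lia).
set A := [set x in take k (enum (~: pset g q))] in cA.
have AR : forall x, x \in A -> x \notin pset g q.
  move=> x; rewrite inE => /mem_take; rewrite mem_enum.
  by rewrite inE.
set D := [set a : 'I_q | [exists x in A, F x (g a)]].
have cD : #|D| <= k * (2 * k - 2).
  apply: leq_trans (card_exists_le A (fun x (a : 'I_q) => F x (g a))) _.
  apply: (@leq_trans (\sum_(x in A) (2 * k - 2))).
    apply: leq_sum => x xA /=.
    have := deg_bound P noext (AR x xA) q0 k0.
    move=> h; apply: (leq_trans _ (leq_sub2r 2 h)); rewrite addnK.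
    done.
  by rewrite big_const iter_addn_0 mulnC cA.
set B := [set g (nat_of_ord a) | a in ~: D].
have cB : #|B| = q - #|D|.
  rewrite card_in_imset.
    by have := cardsC D; rewrite card_ord; lia.
  move=> a b _ _ e; apply: ord_inj; case: P => inj _.
  exact: inj (ltn_ord a) (ltn_ord b) e.
have dAB : [disjoint A & B].
  apply: disjI => x /AR xP /imsetP [a _ e]; move/negP: xP; apply.
  by rewrite e; apply/psetP; exists a.
have [x [y [xA yB Fxy]]] := noK dAB ltac:(lia) ltac:(lia).
case/imsetP: yB => a; rewrite inE => /negP aD ey; apply: aD.
by rewrite inE; apply/existsP; exists x; rewrite xA -ey.
Qed.

Lemma grow j : 0 < k -> forall g q, is_path g q -> k * (2 * k - 2) + k + 1 <= q ->
  q + j + k <= #|V| + 1 -> exists g', is_path g' (q + j).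
Proof.
move=> k0; elim: j => [|j IH] g q P hq hV; first by exists g; rewrite addn0.
have [g' P'] := IH g q P hq ltac:(lia).
have [g'' P''] := extend P' ltac:(lia) ltac:(lia) k0.
by exists g''; rewrite addnS.
Qed.

Lemma long_path n : 0 < k -> 2 * k * k + k + 1 <= #|V| -> n + k <= #|V| + 1 ->
  exists g, is_path g n.
Proof.
move=> k0 hV hn.
have [g [q [P hq]]] := dfs_path ltac:(nia).
case: (leqP n q) => nq; first by exists g; exact: path_restr P nq.
have [g' P'] := grow (j := n - q) k0 P ltac:(nia) ltac:(lia).
by exists g'; rewrite (_ : n = q + (n - q)) //; lia.
Qed.

End Core.

Lemma Jcls_nat N i j : ~~ odd N -> i <= N -> j <= N ->
  [|| (i < N) && (j < N) && ((j == i.+1 %% N) || (i == j.+1 %% N)),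
      (i == N) && (j < N) && ~~ odd j
    | (j == N) && (i < N) && ~~ odd i] ->
  ((i < N) && ~~ odd i) != ((j < N) && ~~ odd j).
Proof.
move=> eN hi hj.
case/or3P.
- case/andP => /andP [iN jN] /orP [] /eqP e.
  + move: e; case: (ltngtP i.+1 N) => c; [rewrite modn_small //| lia | rewrite c modnn]; lia.
  + move: e; case: (ltngtP j.+1 N) => c; [rewrite modn_small //| lia | rewrite c modnn]; lia.
- case/andP => /andP [/eqP iN jN] dj; lia.
- case/andP => /andP [/eqP jN iN] di; lia.
Qed.

Lemma Jcls s m (i j : 'I_(s * m).+1) : ~~ odd s ->
  jahangir_graph s m i j ->
  ((i < s * m) && ~~ odd i) != ((j < s * m) && ~~ odd j).
Proof.
move=> es; rewrite /jahangir_graph => h; move: h; cbv zeta => h.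
have eN : ~~ odd (s * m) by rewrite oddM (negbTE es).
have ev : forall t, s %| t -> ~~ odd t.
  by move=> t /dvdnP [u ->]; rewrite oddM (negbTE es) andbF.
apply: Jcls_nat => //; try by rewrite -ltnS ltn_ord.
case/or3P: h => [h1|/andP [/andP [a b] c]|/andP [/andP [a b] c]]; first by rewrite h1.
- by rewrite a b (ev _ c) ?orbT.
- by rewrite a b (ev _ c) ?orbT.
Qed.

Lemma half_even N : ~~ odd N -> N = 2 * (N %/ 2).
Proof. lia. Qed.

Lemma J_embed (V : finType) (F : rel V) s m (A B : {set V}) :
  symmetric F -> ~~ odd s -> [disjoint A & B] -> (s * m) %/ 2 <= #|A| ->
  ((s * m) %/ 2).+1 <= #|B| ->
  (forall x y, x \in A -> y \in B -> ~~ F x y) ->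
  contains_subgraph (jahangir_graph s m) (compl_graph F).
Proof.
move=> Fsym es dAB cA cB nF.
have eN : s * m = 2 * ((s * m) %/ 2) by apply: half_even; rewrite oddM (negbTE es).
move: cA cB; set k := (s * m) %/ 2 => cA cB.
have ek : s * m = 2 * k by []. clearbody k. clear eN.
have [x0 _] : exists x0, x0 \in B by apply/card_gt0P; lia.
have hA : forall t, t < k -> t < size (enum A).
  by move=> t h; rewrite -cardE; apply: leq_trans cA.
have hB : forall t, t <= k -> t < size (enum B).
  by move=> t h; rewrite -cardE; apply: leq_trans cB.
pose cls (i : 'I_(s * m).+1) := (i < s * m) && ~~ odd i.
pose f (i : 'I_(s * m).+1) := if cls i then nth x0 (enum A) i./2
  else if i < s * m then nth x0 (enum B) i./2 else nth x0 (enum B) k.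
have fA : forall i, cls i -> f i \in A.
  move=> i ci; rewrite /f ci -mem_enum; apply: mem_nth; move: ci; rewrite /cls.
  move=> h; apply: hA; lia.
have fB : forall i, ~~ cls i -> f i \in B.
  move=> i ci; rewrite /f (negbTE ci) -mem_enum; case: ifP => h; apply: mem_nth; apply: hB; lia.
have dis : forall x, x \in A -> x \in B -> False.
  by move=> x xA xB; rewrite (disjointFr dAB xA) in xB.
exists f; split.
- move=> i j e; apply: ord_inj.
  case: (boolP (cls i)) => ci; case: (boolP (cls j)) => cj.
  + move: e; rewrite /f ci cj => /eqP; rewrite nth_uniq ?enum_uniq //; try (apply: hA); move: ci cj; rewrite /cls; lia.
  + by exfalso; apply: (dis (f i)); [exact: fA | rewrite e; exact: fB].
  + by exfalso; apply: (dis (f j)); [exact: fA | rewrite -e; exact: fB].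
  + move: e; rewrite /f (negbTE ci) (negbTE cj).
    have hi := ltn_ord i; have hj := ltn_ord j.
    move: ci cj; rewrite /cls => ci cj.
    case: ifP => h1; case: ifP => h2 /eqP; rewrite nth_uniq ?enum_uniq //; try (apply: hB); lia.
- move=> i j h; have := Jcls es h; rewrite -/(cls i) -/(cls j) /compl_graph => hc.
  case: (boolP (cls i)) hc => ci; case: (boolP (cls j)) => cj //= _.
  + apply/andP; split; last exact: nF (fA _ ci) (fB _ cj).
    by apply/eqP => e; apply: (dis (f i)); [exact: fA | rewrite e; exact: fB].
  + apply/andP; split; last by rewrite Fsym; exact: nF (fA _ cj) (fB _ ci).
    by apply/eqP => e; apply: (dis (f j)); [exact: fA | rewrite -e; exact: fB].
Qed.

Lemma side_card M c (b : bool) :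
  #|[set x : 'I_M | (x < c) == b]| <= (if b then c else M - c).
Proof.
set S := [set x : 'I_M | (x < c) == b].
have u : uniq (map val (enum S)) by rewrite map_inj_uniq ?enum_uniq //; exact: val_inj.
have sz : size (map val (enum S)) = #|S| by rewrite size_map -cardE.
rewrite -sz.
case: b @S u sz => S u sz.
- rewrite -(size_iota 0 c); apply: uniq_leq_size u _ => x /mapP [y].
  by rewrite mem_enum inE mem_iota => /eqP h ->; rewrite /=; lia.
- rewrite -(size_iota c (M - c)); apply: uniq_leq_size u _ => x /mapP [y].
  by rewrite mem_enum inE mem_iota => /eqP h ->; rewrite /=; have := ltn_ord y; lia.
Qed.

Lemma img_card (T U : finType) (h : T -> U) (P : pred U) :
  injective h -> (forall t, P (h t)) -> #|T| <= #|[set x | P x]|.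
Proof.
move=> hi hP; rewrite -cardsT -(card_imset [set: T] hi).
apply: subset_leq_card; apply/subsetP => x /imsetP [t _ ->].
by rewrite inE.
Qed.

Lemma lower s m n M : ~~ odd s -> 2 <= s -> 3 <= m -> (s * m) %/ 2 <= n ->
  M < n + (s * m) %/ 2 - 1 ->
  ~ ramsey_arrow (path_graph n) (jahangir_graph s m) M.
Proof.
move=> es s2 m3 kn MN H.
have eN : s * m = 2 * ((s * m) %/ 2) by apply: half_even; rewrite oddM (negbTE es).
have sm6 : 6 <= s * m by apply: (leq_mul s2 m3).
move: kn MN; set k := (s * m) %/ 2 => kn MN.
have ek : s * m = 2 * k by []. clearbody k. clear eN.
set c := n - 1.
pose FM : rel 'I_M := fun x y => (x != y) && ((x < c) == (y < c)).
have simple : simple_graph FM.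
  split; first by move=> x y; rewrite /FM eq_sym; congr andb; rewrite eq_sym.
  by move=> x; rewrite /FM eqxx.
case: (H FM simple) => [[f [finj fe]]|[f [finj fe]]].
- have n0 : 0 < n by lia.
  set b0 := f (Ordinal n0) < c.
  have side : forall t (ht : t < n), (f (Ordinal ht) < c) = b0.
    elim=> [|t IH] ht; first by rewrite /b0; congr (f _ < c); apply: val_inj.
    have ht' : t < n by lia.
    have e : path_graph n (Ordinal ht') (Ordinal ht) by rewrite /path_graph /= eqxx.
    have := fe _ _ e; rewrite /FM => /andP [_ /eqP <-]; exact: IH.
  have := img_card (P := fun x : 'I_M => (x < c) == b0) finj _.
  rewrite card_ord => /(_ _) h.
  have {}h : n <= #|[set x : 'I_M | (x < c) == b0]|.
    apply: h => t; have := side t (ltn_ord t).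
    by rewrite (_ : Ordinal (ltn_ord t) = t) ?eqxx //=; [move=> -> | apply: val_inj].
  move: h (side_card M c b0); clear side; clearbody b0; case: b0 => h hs; lia.
- pose sd (x : 'I_M) := x < c.
  have fe' : forall x y, jahangir_graph s m x y -> sd (f y) = ~~ sd (f x).
    move=> x y /fe; rewrite /compl_graph /FM /sd.
    case: (f x =P f y) => //= _.
    by case: (f x < c); case: (f y < c).
  set b0 := sd (f (inord 0)).
  have cyc : forall t, t < s * m -> sd (f (inord t)) = (b0 == ~~ odd t).
    elim=> [|t IH] ht; first by rewrite /b0; case: (sd _).
    have e : jahangir_graph s m (inord t) (inord t.+1).
      rewrite /jahangir_graph /= !inordK; try lia.
      have ht1 : t < s * m by lia.
      by rewrite modn_small // eqxx ht ht1.
    rewrite (fe' _ _ e) IH; last lia.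
    by rewrite /=; case: (odd t); case: (b0).
  have cen : sd (f (inord (s * m))) = ~~ b0.
    have e : jahangir_graph s m (inord 0) (inord (s * m)).
      rewrite /jahangir_graph /= !inordK; try lia.
      by rewrite eqxx dvdn0 (_ : 0 < s * m) ?orbT //; lia.
    by rewrite (fe' _ _ e).
  have inj_in : forall a b, a <= s * m -> b <= s * m ->
      f (inord a) = f (inord b) -> a = b.
    move=> a b ha hb /finj /(congr1 val); rewrite /= !inordK //.
  pose hX (t : 'I_k) := f (inord (2 * t)).
  pose hY (t : 'I_k.+1) := f (inord (if t < k then (2 * t).+1 else s * m)).
  have cX := img_card (P := fun x => sd x == b0) (h := hX) _ _.
  have cY := img_card (P := fun x => sd x == ~~ b0) (h := hY) _ _.
  rewrite !card_ord in cX cY.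
  have {}cX : k <= #|[set x : 'I_M | (x < c) == b0]|.
    apply: cX.
    + move=> a b /inj_in e; apply: ord_inj; have := ltn_ord a; have := ltn_ord b.
      move=> ha hb; have := e ltac:(lia) ltac:(lia); lia.
    + move=> t; rewrite /hX cyc; last by have := ltn_ord t; lia.
      by rewrite mul2n odd_double; case: (b0).
  have {}cY : k.+1 <= #|[set x : 'I_M | (x < c) == ~~ b0]|.
    apply: cY.
    + move=> a b /inj_in e; apply: ord_inj; have := ltn_ord a; have := ltn_ord b.
      move=> ha hb; move: e; case: ifP => h1; case: ifP => h2 e;
      have := e ltac:(lia) ltac:(lia); lia.
    + move=> t; rewrite /hY; case: ifP => h.
      * rewrite cyc; last lia.
        by rewrite /= mul2n odd_double; case: (b0).
      * by rewrite cen eqxx.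
  have ec : c = n - 1 by [].
  have hx := leq_trans cX (side_card M c b0).
  have hy := leq_trans cY (side_card M c (~~ b0)).
  have k1 : 0 < k by lia.
  move: hx hy; clear -MN kn ec k1; clearbody b0; move: b0 => b0; clearbody c.
  case: b0 => /= h1 h2.
  all: lia.
Qed.

Lemma upper s m n : 2 <= s -> ~~ odd s -> 3 <= m ->
  (2 * (s * m) - 1) * ((s * m) %/ 2 - 1) + 1 <= n ->
  ramsey_arrow (path_graph n) (jahangir_graph s m) (n + (s * m) %/ 2 - 1).
Proof.
move=> s2 es m3 hn F [Fsym Firr].
have eN : s * m = 2 * ((s * m) %/ 2) by apply: half_even; rewrite oddM (negbTE es).
have sm6 : 6 <= s * m by apply: (leq_mul s2 m3).
move: F Fsym Firr hn; set k := (s * m) %/ 2 => F Fsym Firr hn.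
have ek : s * m = 2 * k by [].
rewrite ek in hn sm6.
have k3 : 3 <= k by lia.
have nbig : 2 * k * k + 2 <= n by nia.
case: (boolP [exists A : {set 'I_(n + k - 1)}, [exists B : {set 'I_(n + k - 1)},
   [&& [disjoint A & B], k <= #|A|, k < #|B| &
       [forall x in A, [forall y in B, ~~ F x y]]]]]).
- case/existsP => A /existsP [B /and4P [d cA cB h]].
  right; apply: (J_embed (A := A) (B := B)) => //.
  move=> x y xA yB; move/forall_inP: h => /(_ x xA) /forall_inP; exact.
- rewrite negb_exists => /forallP hA; left.
  have noK : forall A B : {set 'I_(n + k - 1)}, [disjoint A & B] -> k <= #|A| ->
      k.+1 <= #|B| -> exists x y, [/\ x \in A, y \in B & F x y].
    move=> A B d cA cB; move: (hA A); rewrite negb_exists => /forallP /(_ B).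
    rewrite d cA cB /= negb_forall_in => /existsP [x /andP [xA]].
    rewrite negb_forall_in => /existsP [y /andP [yB]]; rewrite negbK => Fxy.
    by exists x, y.
  have N0 : 0 < n + k - 1 by lia.
  have [g P] := long_path (Ordinal N0) Fsym Firr noK (n := n) ltac:(lia)
    ltac:(rewrite card_ord; nia) ltac:(rewrite card_ord; lia).
  exists (fun i : 'I_n => g i); split.
  + move=> i j e; apply: ord_inj; case: P => inj _.
    exact: inj (ltn_ord i) (ltn_ord j) e.
  + move=> i j; rewrite /path_graph => /orP [] /eqP e;
    apply: (adjS Fsym P); have := ltn_ord i; have := ltn_ord j; lia.
Qed.

Theorem theorem1 (s m n : nat) :
  2 <= s -> ~~ odd s -> 3 <= m ->
  (2 * (s * m) - 1) * ((s * m) %/ 2 - 1) + 1 <= n ->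
  is_ramsey_number (path_graph n) (jahangir_graph s m) (n + (s * m) %/ 2 - 1).
Proof.
move=> s2 es m3 hn; split; first exact: upper.
move=> M hM; apply: lower => //.
have eN : s * m = 2 * ((s * m) %/ 2) by apply: half_even; rewrite oddM (negbTE es).
have sm6 : 6 <= s * m by apply: (leq_mul s2 m3).
move: hn; rewrite eN; move: ((s * m) %/ 2) => k hn; nia.
Qed.
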